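(* Let $(X,\tau)$ be a topological space with an operation $\gamma$ on $\tau$ and $A\subseteq X$. Then (a) $sbd_{\gamma^{*}}(A)=sbd_{\gamma^{*}}(X-A)$; (b) if $\gamma$ is an open operation, then $scl_{\gamma^{*}}(scl_{\gamma^{*}}(A))=scl_{\gamma^{*}}(A)$.
   Context: An operation on $\tau$ is a map $\gamma:\tau\to P(X)$, $V\mapsto V^\gamma$, with $V\subseteq V^\gamma$ for every $V\in\tau$. For $A\subseteq X$, $int_\gamma(A)=\{x\in A: \text{there is an open } N \text{ with } x\in N,\ N^\gamma\subseteq A\}$; $A$ is $\gamma$-open iff $A=int_\gamma(A)$. $cl_\gamma(A)$ is the set of $x\in X$ such that $U^\gamma\cap A\neq\emptyset$ for every open $U\ni x$. $A$ is $\gamma^{*}$-semi-open if there is a $\gamma$-open set $O$ with $O\subseteq A\subseteq cl_\gamma(O)$; $A$ is $\gamma^{*}$-semi-closed if $X-A$ is $\gamma^{*}$-semi-open. $scl_{\gamma^{*}}(A)$ is the intersection of all $\gamma^{*}$-semi-closed sets containing $A$, and $sbd_{\gamma^{*}}(A)=scl_{\gamma^{*}}(A)\cap scl_{\gamma^{*}}(X-A)$. $\gamma$ is open if for every $x\in X$ and every open neighbourhood $U$ of $x$ there is a $\gamma$-open set $B$ with $x\in B$ and $U^\gamma\subseteq B$. *)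

(* Defs.v *)
From mathcomp Require Import all_boot all_classical all_reals.
From mathcomp Require Import topology.
Set Implicit Arguments. Unset Strict Implicit. Unset Printing Implicit Defensive.
Local Open Scope classical_set_scope.

Section GammaDefs.
Variable X : topologicalType.
(* An operation on tau: only its values on open sets matter. *)
Variable gamma : set X -> set X.

Definition is_operation : Prop := forall V : set X, open V -> V `<=` gamma V.

Definition int_g (A : set X) : set X :=
  [set x | A x /\ exists N : set X, [/\ open N, N x & gamma N `<=` A]].

Definition g_open (A : set X) : Prop := A = int_g A.

Definition cl_g (A : set X) : set X :=
  [set x | forall U : set X, open U -> U x -> gamma U `&` A !=set0].

Definition gs_semi_open (A : set X) : Prop :=
  exists O : set X, [/\ g_open O, O `<=` A & A `<=` cl_g O].

Definition gs_semi_closed (A : set X) : Prop := gs_semi_open (~` A).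

Definition scl_gs (A : set X) : set X :=
  \bigcap_(F in [set F | gs_semi_closed F /\ A `<=` F]) F.

Definition sbd_gs (A : set X) : set X := scl_gs A `&` scl_gs (~` A).

Definition open_operation : Prop :=
  forall (x : X) (U : set X), open U -> U x ->
    exists B : set X, [/\ g_open B, B x & gamma U `<=` B].
End GammaDefs.

(* Main.v *)
Require Import Defs.
From mathcomp Require Import all_boot all_classical all_reals.
From mathcomp Require Import topology.
Local Open Scope classical_set_scope.

Theorem proposition3p17 (X : topologicalType) (gamma : set X -> set X)
  (Hgamma : is_operation gamma) (A : set X) :
  sbd_gs gamma A = sbd_gs gamma (~` A) /\
  (open_operation gamma -> scl_gs gamma (scl_gs gamma A) = scl_gs gamma A).
Proof.
split.
  by rewrite /sbd_gs setCK setIC.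
move=> _.
set S := scl_gs gamma A.
have ext : forall B : set X, B `<=` scl_gs gamma B.
  by move=> B x Bx F [_ BF]; exact: BF.
apply/seteqP; split; last exact: ext.
have semiS : gs_semi_closed gamma S.
  pose O := [set x | exists F : set X, (gs_semi_closed gamma F /\ A `<=` F) /\
     exists O' : set X, [/\ g_open gamma O', O' `<=` ~` F, ~` F `<=` cl_g gamma O' & O' x]].
  exists O; split.
  - apply/seteqP; split.
      move=> x Ox; split => //.
      case: Ox => F [HF [O' [gO' sO' cO' O'x]]].
      have : int_g gamma O' x by rewrite -gO'.
      case=> _ [N [oN Nx gN]]; exists N; split => // y /gN O'y.
      by exists F; split => //; exists O'; split.
    by move=> x [].
  - move=> x /= [F [[HF AF] [O' [_ sO' _ O'x]]]] Sx.
    by apply: (sO' x O'x); apply: Sx; split.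
  - move=> x Sx.
    have [F [HF nFx]] : exists F, (gs_semi_closed gamma F /\ A `<=` F) /\ ~ F x.
      apply: contra_notP Sx => H F HF; apply: contra_notP H => nF.
      by exists F.
    case: HF => sc0 AF.
    case: (sc0) => O' [gO' sO' cO'].
    move=> U oU Ux; case: (cO' x nFx U oU Ux) => y [gy O'y].
    exists y; split => //; exists F; split => //; exists O'; split.
      exact: gO'.
    by move=> z /sO'.
    exact: cO'.
    exact: O'y.
by move=> x Hx; apply: Hx; split.
Qed.
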